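(* Let $n\ge 0$ and let $H^n$ be the graded ring defined below. The only invertible elements of degree $0$ in the center of $H^n$ are $1$ and $-1$; that is, the group of units of the degree $0$ part $Z_0(H^n)$ of the center of $H^n$ is $\{\pm 1\}$.
   Context: Let $\mathcal{A}=\mathbb{Z}[X]/(X^2)$, graded by $\deg 1=-1$, $\deg X=1$; it is a commutative Frobenius algebra with counit $\epsilon(1)=0,\ \epsilon(X)=1$ and comultiplication $\Delta(1)=1\otimes X+X\otimes 1$, $\Delta(X)=X\otimes X$. Let $F$ be the associated $(1+1)$-dimensional TQFT: it assigns $\mathcal{A}^{\otimes k}$ to a disjoint union of $k$ planar circles, and to cobordisms the maps built from multiplication (merging two circles), $\Delta$ (splitting), the unit (birth) and $\epsilon$ (death). For a graded abelian group $M$, $M\{i\}$ denotes the shifted group with $M\{i\}_j=M_{j-i}$. A crossingless matching of $2n$ points is a collection of $n$ disjoint arcs in the lower half-plane (a flat tangle with no bottom endpoints and $2n$ top endpoints); let $B^n$ be the set of these. For a flat tangle $a$, $W(a)$ denotes its reflection in a horizontal line; for $a,b\in B^n$, $W(b)a$ ($W(b)$ placed on top of $a$) is a disjoint union of circles. Define $H^n=\bigoplus_{a,b\in B^n}{}_b(H^n)_a$ with ${}_b(H^n)_a=F(W(b)a)\{n\}$. Multiplication ${}_c(H^n)_b\otimes{}_d(H^n)_a\to H^n$ is zero if $b\neq d$, and for $b=d$ is the map $F(W(c)b)\otimes F(W(b)a)\to F(W(c)a)$ induced by the minimal saddle cobordism from $W(c)b\,W(b)a$ to $W(c)a$ which contracts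 the arcs of $b$ against their mirror images in $W(b)$. This makes $H^n$ an associative unital graded ring (nonnegatively graded), with unit $\sum_a e_a$, where $e_a=1\otimes\cdots\otimes 1\in{}_a(H^n)_a$. *)

(* Defs.v *)
(* Khovanov's arc ring H^n, built concretely as a free
   abelian group on its standard basis, with multiplication given by the
   TQFT F applied to the minimal saddle cobordism. *)
From mathcomp Require Import all_boot all_order all_algebra.
Set Implicit Arguments. Unset Strict Implicit. Unset Printing Implicit Defensive.
Import GRing.Theory.
Local Open Scope int_scope.
Local Open Scope nat_scope.

(* Crossingless matchings of 2n points: fixed-point free involutions of
   {0,..,2n-1} without crossing arcs (arcs lie in the lower half-plane). *)
Definition is_cm (n : nat) (f : {ffun 'I_(n.*2) -> 'I_(n.*2)}) : bool :=
  [forall i : 'I_(n.*2), (f (f i) == i) && (f i != i)] &&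
  [forall i : 'I_(n.*2), forall j : 'I_(n.*2), ~~ [&& (i < j)%N, (j < f i)%N & (f i < f j)%N]].

Definition cmatch (n : nat) := {f : {ffun 'I_(n.*2) -> 'I_(n.*2)} | is_cm f}.

(* Adjacency on the 2n points of the closed diagram W(b)a: an arc of a or
   an arc of b.  Connected components = circles of W(b)a. *)
Definition circ_rel n (b a : cmatch n) : rel 'I_(n.*2) :=
  fun x y => (y == val a x) || (y == val b x).

(* A basis element of F(W(b)a) = A^{(x) #circles}: a choice of 1 (false) or
   X (true) for every circle, encoded as a labelling of the points which is
   constant along arcs of a and of b. *)
Definition valid_label n (b a : cmatch n) (l : {ffun 'I_(n.*2) -> bool}) :=
  [forall i, (l (val a i) == l i) && (l (val b i) == l i)].

(* Basis of H^n: triples (b, a, l) spanning _b(H^n)_a. *)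
Definition Hkey (n : nat) :=
  {k : cmatch n * cmatch n * {ffun 'I_(n.*2) -> bool} | valid_label k.1.1 k.1.2 k.2}.

Definition H (n : nat) := {ffun Hkey n -> int}.

(* Degree of a basis element of _b(H^n)_a = F(W(b)a){n}:
   (#circles labelled X) - (#circles labelled 1) + n. *)
Definition Hdeg n (k : Hkey n) : int :=
  let: (b, a, l) := val k in
  ((n_comp (circ_rel b a) [pred x | l x])%:Z
   - (n_comp (circ_rel b a) [pred x | ~~ l x])%:Z + n%:Z)%R.

(* A diagram on a finite vertex set
   V is given by two fixed-point-free involutions P, Q (each vertex lies on
   one P-arc and one Q-arc); its circles are the connected components.
   F(diagram) is free on labellings of vertices constant on circles. *)
Section Saddle.
Variable V : finType.

Definition srel (P Q : V -> V) : rel V := fun x y => (y == P x) || (y == Q x).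

Definition Vec := {ffun {ffun V -> bool} -> int}.

Definition delta (l : {ffun V -> bool}) : Vec := [ffun l' => ((l' == l) : nat)%:Z].

(* Saddle replacing the Q-arcs {p, Q p} and {p', Q p'} by {p, p'} and
   {Q p, Q p'}. *)
Definition swapQ (Q : V -> V) (p p' : V) : V -> V := fun x =>
  if x == p then p' else if x == p' then p
  else if x == Q p then Q p' else if x == Q p' then Q p else Q x.

(* The map F(saddle) on a basis element: multiplication m if the saddle
   merges two circles, comultiplication Delta if it splits one. *)
Definition saddle_basis (P Q : V -> V) (p p' : V) (l : {ffun V -> bool}) : Vec :=
  let cn := connect (srel P (swapQ Q p p')) in
  if connect (srel P Q) p p' then
    (* split: C -> C1 (through p, p') and C2 (through Q p, Q p') *)
    if l p then delta l  (* Delta(X) = X (x) X *)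
    else (* Delta(1) = 1 (x) X + X (x) 1 *)
      (delta [ffun x => if cn (Q p) x then true else l x]
       + delta [ffun x => if cn p x then true else l x])%R
  else
    (* merge of the circles through p and p' : 1.1=1, 1.X=X.1=X, X.X=0 *)
    if l p && l p' then 0%R
    else delta [ffun x => if cn p x then l p || l p' else l x].

Definition saddle_vec (P Q : V -> V) (p p' : V) (v : Vec) : Vec :=
  (\sum_(l : {ffun V -> bool}) saddle_basis P Q p p' l *~ v l)%R.
End Saddle.

(* The stacked diagram W(c)b W(b)a, on vertices (i, true) (between W(c) and
   b) and (i, false) (between W(b) and a). *)
Definition Vst n := ('I_(n.*2) * bool)%type.

Definition Pst n (c a : cmatch n) : Vst n -> Vst n :=
  fun x => if x.2 then (val c x.1, true) else (val a x.1, false).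

Definition Qst n (b : cmatch n) : Vst n -> Vst n := fun x => (val b x.1, x.2).

(* Perform the minimal saddle cobordism: one saddle for each arc {i, b i}
   (i < b i) of b, contracting it against its mirror image in W(b). *)
Definition cobordism_map n (c b a : cmatch n) (v : Vec (Vst n)) : Vec (Vst n) :=
  (foldl (fun st (i : 'I_(n.*2)) =>
     if (i < val b i)%N then
       (swapQ st.1 (i, true) (i, false),
        saddle_vec (Pst c a) st.1 (i, true) (i, false) st.2)
     else st) (Qst b, v) (enum 'I_(n.*2))).2.

Definition mulkey n (k1 k2 : Hkey n) : H n :=
  let: (c, b, s) := val k1 in
  let: (d, a, t) := val k2 in
  if b == d then
    let vf := cobordism_map c b a
                (delta [ffun x : Vst n => if x.2 then s x.1 else t x.1]) in
    [ffun k : Hkey n =>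
       if ((val k).1.1 == c) && ((val k).1.2 == a)
       then vf [ffun x : Vst n => (val k).2 x.1] else 0%R]
  else 0%R.

Definition Hmul n (x y : H n) : H n :=
  (\sum_(k1 : Hkey n) \sum_(k2 : Hkey n) mulkey k1 k2 *~ (x k1 * y k2))%R.

(* 1 = sum_a e_a, e_a = 1 (x) ... (x) 1 in _a(H^n)_a. *)
Definition Hone n : H n :=
  [ffun k : Hkey n =>
     (((val k).1.1 == (val k).1.2) && [forall i, ~~ (val k).2 i] : nat)%:Z].

Definition homog0 n (z : H n) : Prop := forall k, z k != 0%R -> Hdeg k = 0%R.
Definition central n (z : H n) : Prop := forall y : H n, Hmul z y = Hmul y z.
Definition in_Z0 n (z : H n) : Prop := homog0 z /\ central z.
Definition unit_Z0 n (z : H n) : Prop :=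
  in_Z0 z /\ exists w : H n, in_Z0 w /\ Hmul z w = Hone n /\ Hmul w z = Hone n.

(* Main.v *)
Require Import Defs.
From mathcomp Require Import all_boot all_order all_algebra zify.
From Stdlib Require Import FunctionalExtensionality.
Set Implicit Arguments. Unset Strict Implicit. Unset Printing Implicit Defensive.
Import GRing.Theory.
Local Notation root := fingraph.root.
Local Notation roots := fingraph.roots.

Section Comb.
Variable n : nat.

Lemma cm_inv (a : cmatch n) i : val a (val a i) = i.
Proof. by have /andP[/forallP/(_ i)/andP[/eqP -> _] _] := valP a. Qed.

Lemma cm_neq (a : cmatch n) i : val a i != i.
Proof. by have /andP[/forallP/(_ i)/andP[_ ->] _] := valP a. Qed.

Lemma fwd_connect (T : finType) (e : rel T) (S : pred T) :
  (forall x y, e x y -> S x -> S y) -> forall x y, connect e x y -> S x -> S y.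
Proof.
move=> cl x y /connectP[p pp ->]; elim: p x pp => //= z p IH x /andP[exz pp] Sx.
exact: IH pp (cl _ _ exz Sx).
Qed.

Lemma connect_fun (T : finType) (U : eqType) (e : rel T) (f : T -> U) :
  (forall x y, e x y -> f x = f y) -> forall x y, connect e x y -> f x = f y.
Proof.
move=> cl x y cxy; apply/eqP.
apply: (@fwd_connect _ e (fun z => f x == f z)) cxy _ => //.
by move=> u v /cl -> .
Qed.

Lemma circ_sym (b a : cmatch n) : connect_sym (circ_rel b a).
Proof.
apply: sym_connect_sym => x y; rewrite /circ_rel.
apply/orP/orP => -[/eqP ->|/eqP ->]; rewrite ?cm_inv eqxx; by [left|right].
Qed.

Lemma roots_bound (b a : cmatch n) :
  (#|roots (circ_rel b a)| <= n) /\ (#|roots (circ_rel b a)| = n -> b = a).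
Proof.
set e := circ_rel b a.
have sym := circ_sym b a.
set R := [set x | roots e x].
set A := [set val a x | x in R].
have ea x : e x (val a x) by rewrite /e /circ_rel eqxx.
have eb x : e x (val b x) by rewrite /e /circ_rel eqxx orbT.
have rootR x : x \in R -> root e x = x by rewrite inE => /eqP.
have disj : R :&: A = set0.
  apply/setP => y; rewrite !inE; apply/negP => /andP[Ry /imsetP[r Rr yr]].
  have : root e r = root e y by apply/(fingraph.rootP sym); rewrite yr connect1.
  rewrite !rootR // ?inE // => ry.
  by move: (cm_neq a r); rewrite -yr ry eqxx.
have cA : #|A| = #|R| by rewrite card_imset //; apply: (can_inj (@cm_inv a)).
have cU : #|R :|: A| = #|R| + #|R| by rewrite cardsU disj cards0 cA subn0.
have le : #|R :|: A| <= n.*2 by rewrite -[X in _ <= X](card_ord (n.*2)) max_card.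
have cR : #|roots e| = #|R| by apply: eq_card => x; rewrite !inE.
rewrite cR; split; first by move: le; rewrite cU; lia.
move=> eqn.
have full : R :|: A =i predT.
  apply/subset_cardP; last by apply/subsetP.
  by rewrite cU eqn card_ord; lia.
have rootc x y : x \in R -> connect e x y -> root e y = x.
  move=> Rx cxy; rewrite -(rootR x Rx); apply/esym/(fingraph.rootP sym)/cxy.
have cov x : x \in R \/ exists2 r, r \in R & x = val a r.
  move: (full x); rewrite in_setU inE => /orP[Rx|/imsetP[r Rr ->]]; [by left|by right; exists r].
have key r : r \in R -> val b r = val a r.
  move=> Rr; have rb : root e (val b r) = r by apply: rootc => //; apply: connect1.
  case: (cov (val b r)) => [Rb|[r' Rr' br']].
    by move: (cm_neq b r); rewrite -{2}rb rootR // eqxx.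
  have : root e (val a r') = r' by apply: rootc => //; apply: connect1.
  by rewrite -br' rb => rr; rewrite br' -rr.
apply: val_inj; apply/ffunP => x.
case: (cov x) => [Rx|[r Rr ->]]; first exact: key.
have rb : root e (val b (val a r)) = r.
  apply: rootc => //; apply: connect_trans (connect1 (ea r)) (connect1 (eb _)).
case: (cov (val b (val a r))) => [Rb|[r' Rr' br']].
  by rewrite cm_inv -{2}rb rootR.
have : root e (val a r') = r' by apply: rootc => //; apply: connect1.
rewrite -br' rb => rr; move: (cm_neq b (val a r)); by rewrite br' -rr eqxx.
Qed.

Lemma roots_same (a : cmatch n) : #|roots (circ_rel a a)| = n.
Proof.
set e := circ_rel a a.
have sym := circ_sym a a.
set R := [set x | roots e x].
set A := [set val a x | x in R].
have ea x : e x (val a x) by rewrite /e /circ_rel eqxx.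
have rootR x : x \in R -> root e x = x by rewrite inE => /eqP.
have disj : R :&: A = set0.
  apply/setP => y; rewrite !inE; apply/negP => /andP[Ry /imsetP[r Rr yr]].
  have : root e r = root e y by apply/(fingraph.rootP sym); rewrite yr connect1.
  rewrite !rootR // ?inE // => ry.
  by move: (cm_neq a r); rewrite -yr ry eqxx.
have cA : #|A| = #|R| by rewrite card_imset //; apply: (can_inj (@cm_inv a)).
have cU : #|R :|: A| = #|R| + #|R| by rewrite cardsU disj cards0 cA subn0.
have cR : #|roots e| = #|R| by apply: eq_card => x; rewrite !inE.
have full : R :|: A = setT.
  apply/setP => x; rewrite !inE.
  have cx : connect e x (root e x) := connect_root e x.
  have : (root e x == x) || (root e x == val a x).
    apply: (@fwd_connect _ e (fun y => (y == x) || (y == val a x))) cx _; last by rewrite eqxx.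
    move=> u v; rewrite /e /circ_rel orbb => /eqP -> /orP[]/eqP ->;
      by rewrite ?cm_inv eqxx ?orbT.
  case/orP => /eqP h; first by rewrite /roots h eqxx.
  apply/orP; right; apply/imsetP; exists (root e x); last by rewrite h cm_inv.
  by rewrite inE roots_root.
have : #|R :|: A| = n.*2 by rewrite full cardsT card_ord.
by rewrite cU cR; lia.
Qed.

End Comb.

Section Deg.
Variable n : nat.

Lemma valid0 (b a : cmatch n) : valid_label b a [ffun=> false].
Proof. by apply/forallP => i; rewrite !ffunE. Qed.

Definition ekey (a : cmatch n) : Hkey n := exist _ (a, a, [ffun=> false]) (valid0 a a).

Lemma ncomp_split (b a : cmatch n) (l : {ffun 'I_(n.*2) -> bool}) :
  n_comp (circ_rel b a) [pred x | l x] + n_comp (circ_rel b a) [pred x | ~~ l x]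
  = #|roots (circ_rel b a)|.
Proof.
have -> : n_comp (circ_rel b a) [pred x | ~~ l x] = n_comp (circ_rel b a) [predC [pred x | l x]].
  by apply: eq_n_comp_r => x; rewrite !inE.
rewrite -n_compC; apply: eq_card => x; by rewrite !inE andbT.
Qed.

Lemma Hdeg_ekey a : Hdeg (ekey a) = 0%R.
Proof.
rewrite /Hdeg /=.
have h := ncomp_split a a [ffun=> false]; rewrite roots_same in h.
have X0 : n_comp (circ_rel a a) [pred x | [ffun=> false] x] = 0.
  by apply: eq_card0 => x; rewrite !inE ffunE andbF.
rewrite X0 in h *; move: h; set m := n_comp _ _; lia.
Qed.

Lemma Hdeg0 (k : Hkey n) : Hdeg k = 0%R -> k = ekey (val k).1.1.
Proof.
case: k => [[[b a] l] v] /=; rewrite /Hdeg /=.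
have h := ncomp_split b a l.
have [le eqb] := roots_bound b a.
set X := n_comp _ [pred x | l x]; set O := n_comp _ [pred x | ~~ l x] in h * => hd.
have X0 : X = 0 by lia.
have Rn : #|roots (circ_rel b a)| = n by lia.
have ba := eqb Rn; subst a.
have l0 : l = [ffun=> false].
  apply/ffunP => x; rewrite ffunE; apply/negP => lx.
  have lr : l x = l (root (circ_rel b b) x).
    apply: connect_fun (connect_root _ x) => u w; rewrite /circ_rel orbb => /eqP ->.
    by move: v => /forallP/(_ u)/andP[/eqP -> _].
  by have := card0_eq X0 (root (circ_rel b b) x); rewrite !inE (roots_root (circ_sym b b)) /= -lr lx.
subst l; exact: val_inj.
Qed.

End Deg.

Lemma saddle_vec_delta (V : finType) (P Q : V -> V) p p' (L : {ffun V -> bool}) :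
  saddle_vec P Q p p' (delta L) = saddle_basis P Q p p' L.
Proof.
rewrite /saddle_vec (bigD1 L) //= big1 ?addr0.
  by rewrite ffunE eqxx mulr1z.
by move=> l nl; rewrite ffunE (negbTE nl) mulr0z.
Qed.

Section Unit.
Variables (n : nat) (c a b : cmatch n) (tau : bool) (t : {ffun 'I_(n.*2) -> bool}).
Hypothesis htau : forall i, (if tau then val c i else val a i) = val b i.
Hypothesis htc : forall i, t (val c i) = t i.
Hypothesis hta : forall i, t (val a i) = t i.
Hypothesis htb : forall i, t (val b i) = t i.

Local Notation P := (Pst c a).
Definition Dk (k : nat) (j : 'I_(n.*2)) := (j < k) || (val b j < k).
Definition Qk k (x : Vst n) : Vst n := if Dk k x.1 then (x.1, ~~ x.2) else (val b x.1, x.2).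
Definition Lk k : {ffun Vst n -> bool} :=
  [ffun x => if (x.2 == tau) && ~~ Dk k x.1 then false else t x.1].

Lemma Dk_b k j : Dk k (val b j) = Dk k j.
Proof. by rewrite /Dk cm_inv orbC. Qed.

Lemma Dk_S k j : Dk k.+1 j = [|| Dk k j, val j == k | val (val b j) == k].
Proof.
rewrite /Dk !ltnS.
by case: (ltngtP j k); case: (ltngtP (val b j) k); rewrite ?orbT ?orbF.
Qed.

Lemma P_inv x : P (P x) = x.
Proof. by case: x => j [] /=; rewrite /Pst /= cm_inv. Qed.

Lemma Qk_inv k x : Qk k (Qk k x) = x.
Proof.
case: x => j s; rewrite /Qk /=.
case D: (Dk k j) => /=; first by rewrite D negbK.
by rewrite Dk_b D cm_inv.
Qed.

Lemma P_tau x : x.2 = tau -> P x = (val b x.1, tau).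
Proof. by case: x => j s /= ->; move: (htau j); rewrite /Pst; case: tau => /= ->. Qed.

Lemma srel_symm (Q : Vst n -> Vst n) : (forall x, Q (Q x) = x) -> connect_sym (srel P Q).
Proof.
move=> hQ; apply: sym_connect_sym => x y; rewrite /srel.
by apply/orP/orP => -[/eqP->|/eqP->]; rewrite ?P_inv ?hQ eqxx; [left|right|left|right].
Qed.

Lemma t_edge k x y : srel P (Qk k) x y -> t x.1 = t y.1.
Proof.
rewrite /srel => /orP[]/eqP->; case: x => j s; rewrite /Pst /Qk /=.
  by case: s => /=; rewrite ?htc ?hta.
by case: (Dk k j) => //=; rewrite htb.
Qed.


Lemma step_lt k (i : 'I_(n.*2)) : val i = k -> i < val b i ->
   swapQ (Qk k) (i,true) (i,false) = Qk k.+1 /\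
   saddle_vec P (Qk k) (i,true) (i,false) (delta (Lk k)) = delta (Lk k.+1).
Proof.
move=> hk hlt.
have Dki : Dk k i = false by rewrite /Dk -hk ltnn /=; apply/negbTE; rewrite -leqNgt ltnW.
have Dkbi : Dk k (val b i) = false by rewrite Dk_b.
have DSi : Dk k.+1 i = true by rewrite Dk_S hk eqxx orbT.
have DSbi : Dk k.+1 (val b i) = true by rewrite Dk_b.
have DS j : val j != k -> val (val b j) != k -> Dk k.+1 j = Dk k j.
  by move=> h1 h2; rewrite Dk_S (negbTE h1) (negbTE h2) !orbF.
have swp : swapQ (Qk k) (i,true) (i,false) = Qk k.+1.
  apply: functional_extensionality => -[j s]; rewrite /swapQ /Qk /= ?Dki ?DSi ?DSbi /=.
  case: (eqVneq j i) => [->|nji].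
    by case: s; rewrite !xpair_eqE !eqxx /= ?DSi.
  rewrite !xpair_eqE (negbTE nji) /=.
  case: (eqVneq j (val b i)) => [->|njb].
    by case: s => /=; rewrite DSbi.
  rewrite /= DS //; first by rewrite -hk; exact: nji.
  by rewrite -hk; apply: contra njb => /eqP/val_inj <-; rewrite cm_inv.
split => //.
rewrite saddle_vec_delta /saddle_basis swp.
have nc : connect (srel P (Qk k)) (i,true) (i,false) = false.
  apply/negP => C.
  have C' : connect (srel P (Qk k)) (i,tau) (i,~~tau).
    by case: tau => //=; rewrite (srel_symm (@Qk_inv k)).
  pose S := [pred x : Vst n | (x.2 == tau) && ((x.1 == i) || (x.1 == val b i))].
  have cl : forall x y, srel P (Qk k) x y -> S x -> S y.
    move=> x y /orP[]/eqP -> /andP[/eqP h2 h1]; first rewrite P_tau //.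
      by rewrite /S /= eqxx /=; case/orP: h1 => /eqP ->; rewrite ?cm_inv eqxx ?orbT.
    have Dx : Dk k x.1 = false by case/orP: h1 => /eqP ->.
    by rewrite /Qk Dx /S /= h2 eqxx /=; case/orP: h1 => /eqP ->; rewrite ?cm_inv eqxx ?orbT.
  have ntt : (~~ tau == tau) = false by case: tau.
  by have := fwd_connect cl C'; rewrite /S /= !eqxx ntt /= => /(_ isT).
rewrite nc.
have Lpp : Lk k (i,true) && Lk k (i,false) = false.
  by rewrite !ffunE /= Dki; case: tau; rewrite ?andbF.
rewrite Lpp; congr delta; apply/ffunP => x.
have -> : Lk k (i,true) || Lk k (i,false) = t i by rewrite !ffunE /= Dki; case: tau; rewrite ?orbF.
rewrite !ffunE.
have symS := srel_symm (@Qk_inv k.+1).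
have cpt : connect (srel P (Qk k.+1)) (i,true) (i,tau).
  case: tau; first exact: connect0.
  by apply: connect1; rewrite /srel /Qk /= DSi eqxx orbT.
have cpb : connect (srel P (Qk k.+1)) (i,true) (val b i,tau).
  apply: connect_trans cpt (connect1 _); by rewrite /srel P_tau // eqxx.
case C: (connect _ (i,true) x).
  have -> : t i = t x.1.
    exact: (@connect_fun _ _ _ (fun y : Vst n => t y.1) (@t_edge k.+1) _ _ C).
  case S': ((x.2 == tau) && ~~ Dk k.+1 x.1) => //.
  pose S := [pred y : Vst n | (y.2 == tau) && ~~ Dk k.+1 y.1].
  have cl : forall x y, srel P (Qk k.+1) x y -> S x -> S y.
    move=> u w /orP[]/eqP -> /andP[/eqP h2 h1]; first by rewrite P_tau // /S /= eqxx Dk_b.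
    by rewrite /Qk (negbTE h1) /S /= h2 eqxx Dk_b.
  rewrite symS in C.
  by have := fwd_connect cl C; rewrite /S /= S' DSi andbF => /(_ isT).
case E: (x.2 == tau) => //=.
case: x C E => j s C /= /eqP E; subst s.
rewrite Dk_S.
case: (eqVneq (val j) k) => [hj|hj].
  have ji : j = i by apply: val_inj; rewrite hj hk.
  by subst j; rewrite cpt in C.
case: (eqVneq (val (val b j)) k) => [hj'|hj'].
  have ji : j = val b i by rewrite -[j](cm_inv b); congr (val b _); apply: val_inj; rewrite hj' hk.
  by subst j; rewrite cpb in C.
by rewrite !orbF.
Qed.


Lemma Dk_ge k (i : 'I_(n.*2)) : val i = k -> ~~ (i < val b i) -> Dk k.+1 =1 Dk k.
Proof.
move=> hk hge.
have bi : val b i < i by rewrite ltn_neqAle (cm_neq b i) /= leqNgt.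
have Dki : Dk k i by rewrite /Dk -hk bi orbT.
move=> j; rewrite Dk_S.
case: (eqVneq (val j) k) => [hj|hj].
  have -> : j = i by apply: val_inj; rewrite hj hk.
  by rewrite Dki.
case: (eqVneq (val (val b j)) k) => [hj'|hj'].
  have -> : j = val b i by rewrite -[j](cm_inv b); congr (val b _); apply: val_inj; rewrite hj' hk.
  by rewrite Dk_b Dki.
by rewrite !orbF.
Qed.

Lemma fold_inv k : k <= n.*2 ->
  foldl (fun st (i : 'I_(n.*2)) =>
     if (i < val b i)%N then
       (swapQ st.1 (i, true) (i, false),
        saddle_vec (Pst c a) st.1 (i, true) (i, false) st.2)
     else st) (Qst b, delta (Lk 0)) (take k (enum 'I_(n.*2)))
  = (Qk k, delta (Lk k)).
Proof.
elim: k => [|k IH] hk.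
  rewrite take0 /=; congr pair.
have hk' : k < n.*2 by [].
rewrite (take_nth (Ordinal hk')) ?size_enum_ord //. rewrite foldl_rcons. rewrite IH; last exact: ltnW.
have -> : nth (Ordinal hk') (enum 'I_(n.*2)) k = Ordinal hk' by apply: val_inj; rewrite /= nth_enum_ord.
case: ifP => hlt.
  have [h1 h2] := @step_lt k (Ordinal hk') erefl hlt.
  by rewrite [(_, _).1]/= [(_,_).2]/= h1 h2.
have D := @Dk_ge k (Ordinal hk') erefl (negbT hlt).
congr pair.
  by apply: functional_extensionality => x; rewrite /Qk D.
by congr delta; apply/ffunP => x; rewrite !ffunE D.
Qed.

Lemma cobordism_unit :
  cobordism_map c b a (delta (Lk 0)) = delta [ffun x : Vst n => t x.1].
Proof.
rewrite /cobordism_map -(take_size (enum 'I_(n.*2))) size_enum_ord.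
rewrite fold_inv //.
rewrite [(_, _).2]/=.
congr delta; apply/ffunP => x; rewrite !ffunE.
have -> : Dk (n.*2) x.1 by rewrite /Dk ltn_ord.
by rewrite andbF.
Qed.

End Unit.
Local Open Scope ring_scope.

Lemma ffN (T : finType) (f : {ffun T -> int}) k : (- f) k = - f k.
Proof. by rewrite !ffunE. Qed.
Lemma ffMz (T : finType) (f : {ffun T -> int}) m k : (f *~ m) k = f k *~ m.
Proof. by case: m => m; rewrite ?NegzE /= ?ffN ffunMnE. Qed.

Section Alg.
Variable n : nat.

Definition bv (k : Hkey n) : H n := [ffun k' => ((k' == k) : nat)%:Z].

Lemma ffun_lift_eq (t t' : {ffun 'I_(n.*2) -> bool}) :
  ([ffun x : Vst n => t' x.1] == [ffun x : Vst n => t x.1]) = (t' == t).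
Proof.
apply/eqP/eqP => [h|->] //; apply/ffunP => j.
by move/ffunP: h => /(_ (j,true)); rewrite !ffunE.
Qed.

Lemma key_eq (k : Hkey n) c a t v :
  (k == exist _ (c, a, t) v) = [&& (val k).1.1 == c, (val k).1.2 == a & (val k).2 == t].
Proof. by rewrite -val_eqE /=; case: (val k) => [[c' a'] t'] /=; rewrite !xpair_eqE andbA. Qed.

Lemma mulkey_left (c : cmatch n) (k2 : Hkey n) :
  mulkey (ekey c) k2 = if c == (val k2).1.1 then bv k2 else 0.
Proof.
case: k2 => [[[d a] t] v] /=; rewrite /mulkey /=.
case: (eqVneq c d) => [cd|nd] //; subst d.
have ht i : t (val a i) = t i /\ t (val c i) = t i.
  by move: v => /forallP/(_ i)/andP[/eqP -> /eqP ->].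
have -> : [ffun x : Vst n => if x.2 then [ffun=> false] x.1 else t x.1] = Lk c true t 0.
  by apply/ffunP => x; rewrite !ffunE /=; case: x.2.
rewrite (@cobordism_unit n c a c true t) //; try by move=> i; case: (ht i).
apply/ffunP => k; rewrite !ffunE key_eq.
case: ifP => /= h; last by rewrite andbA h.
  by rewrite ffun_lift_eq; move: h => /andP[-> ->].
Qed.

Lemma mulkey_right (d : cmatch n) (k1 : Hkey n) :
  mulkey k1 (ekey d) = if (val k1).1.2 == d then bv k1 else 0.
Proof.
case: k1 => [[[c b] s] v] /=; rewrite /mulkey /=.
case: (eqVneq b d) => [bd|nd] //; subst b.
have ht i : s (val d i) = s i /\ s (val c i) = s i.
  by move: v => /forallP/(_ i)/andP[/eqP -> /eqP ->].
have -> : [ffun x : Vst n => if x.2 then s x.1 else [ffun=> false] x.1] = Lk d false s 0.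
  by apply/ffunP => x; rewrite !ffunE /=; case: x.2.
rewrite (@cobordism_unit n c d d false s) //; try by move=> i; case: (ht i).
apply/ffunP => k; rewrite !ffunE key_eq.
case: ifP => /= h; last by rewrite andbA h.
by rewrite ffun_lift_eq; move: h => /andP[-> ->].
Qed.

End Alg.

Section Main.
Variable n : nat.

Definition suppE (z : H n) := forall k, z k != 0 -> k = ekey (val k).1.1.

Lemma Hmul_suppL (z y : H n) : suppE z -> Hmul z y = [ffun k => z (ekey (val k).1.1) * y k].
Proof.
move=> sz; apply/ffunP => k; rewrite ffunE /Hmul sum_ffunE.
rewrite (bigD1 (ekey (val k).1.1)) //= [X in _ + X]big1 ?addr0.
  rewrite sum_ffunE (bigD1 k) //= [X in _ + X]big1 ?addr0.
    by rewrite ffMz mulkey_left eqxx ffunE eqxx /= mulrzz mul1r.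
  move=> k2 nk2; rewrite ffMz mulkey_left; case: ifP => _; rewrite ffunE ?(eq_sym k) ?(negbTE nk2) /= ?mul0rz //.
move=> k1 nk1; rewrite sum_ffunE big1 // => k2 _; rewrite ffMz.
case: (eqVneq (z k1) 0) => [->|nz]; first by rewrite mul0r mulr0z.
have e1 := sz _ nz; rewrite e1 mulkey_left.
case: ifP => h; last by rewrite ffunE mul0rz.
rewrite ffunE; case: (eqVneq k k2) => [ek|]; last by rewrite /= mul0rz.
by subst k2; move: nk1; rewrite e1 (eqP h) eqxx.
Qed.

Lemma Hmul_suppR (z y : H n) : suppE z -> Hmul y z = [ffun k => y k * z (ekey (val k).1.2)].
Proof.
move=> sz; apply/ffunP => k; rewrite ffunE /Hmul sum_ffunE.
rewrite (bigD1 k) //= [X in _ + X]big1 ?addr0.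
  rewrite sum_ffunE (bigD1 (ekey (val k).1.2)) //= [X in _ + X]big1 ?addr0.
    by rewrite ffMz mulkey_right eqxx ffunE eqxx /= mulrzz mul1r.
  move=> k2 nk2; rewrite ffMz.
  case: (eqVneq (z k2) 0) => [->|nz]; first by rewrite mulr0 mulr0z.
  have e2 := sz _ nz; rewrite e2 mulkey_right.
  case: ifP => h; last by rewrite ffunE mul0rz.
  by move: nk2; rewrite e2 -(eqP h) eqxx.
move=> k1 nk1; rewrite sum_ffunE big1 // => k2 _; rewrite ffMz.
case: (eqVneq (z k2) 0) => [->|nz]; first by rewrite mulr0 mulr0z.
have e2 := sz _ nz; rewrite e2 mulkey_right.
case: ifP => h; last by rewrite ffunE mul0rz.
by rewrite ffunE eq_sym (negbTE nk1) /= mul0rz.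
Qed.

Lemma Hone_ekey c : Hone n (ekey c) = 1.
Proof.
rewrite ffunE /= eqxx /=.
case: forallP => // H; exfalso; apply: H => i; by rewrite ffunE.
Qed.

Lemma Hone_supp : suppE (Hone n).
Proof.
move=> k; rewrite ffunE; case: k => [[[b a] l] v] /=.
case: (eqVneq b a) => [ba|] //=; subst a.
case E: [forall i, ~~ l i] => //= _.
have l0 : l = [ffun=> false] by apply/ffunP => i; rewrite ffunE; apply/negbTE; move/forallP: E.
subst l; exact: val_inj.
Qed.

Lemma supp_const (z : H n) lam : suppE z -> (forall c, z (ekey c) = lam) ->
  forall k, z k = lam * Hone n k.
Proof.
move=> sz hc k.
case: (eqVneq k (ekey (val k).1.1)) => [ek|nek].
  by rewrite ek hc Hone_ekey mulr1.
have -> : z k = 0 by apply/eqP; apply: contraR nek => /sz <-.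
have -> : Hone n k = 0 by apply/eqP; apply: contraR nek => /Hone_supp <-.
by rewrite mulr0.
Qed.

Lemma const_Z0 (z : H n) lam : suppE z -> (forall c, z (ekey c) = lam) -> in_Z0 z.
Proof.
move=> sz hc; split.
  by move=> k /sz ->; rewrite Hdeg_ekey.
move=> y; rewrite Hmul_suppL // Hmul_suppR //.
by apply/ffunP => k; rewrite !ffunE !hc mulrC.
Qed.

Lemma const_sq (z : H n) lam : suppE z -> (forall c, z (ekey c) = lam) -> lam * lam = 1 ->
  Hmul z z = Hone n.
Proof.
move=> sz hc hl; rewrite Hmul_suppL //; apply/ffunP => k; rewrite ffunE hc.
by rewrite (supp_const sz hc) mulrA hl mul1r.
Qed.

Lemma intfac (x y : int) : x * y = 1 -> x = 1 \/ x = -1.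
Proof.
move=> h; have := intUnitRing.unitzPl (n:=y) (m:=x); rewrite mulrC => /(_ h).
rewrite qualifE /=; move/orP=>[]/eqP; lia.
Qed.

Lemma homog_supp (z : H n) : homog0 z -> suppE z.
Proof. by move=> hz k /hz /Hdeg0. Qed.

End Main.

Theorem proposition2 (n : nat) (z : H n) :
  unit_Z0 z <-> (z = Hone n \/ z = (- Hone n)%R).
Proof.
split.
  move=> [[hz cz] [w [[hw _] [zw _]]]].
  have sz := homog_supp hz; have sw := homog_supp hw.
  have eqc b a : z (ekey b) = z (ekey a).
    pose k : Hkey n := exist _ (b, a, [ffun=> false]) (valid0 b a).
    have := cz (bv k); rewrite Hmul_suppL // Hmul_suppR // => /ffunP /(_ k).
    by rewrite !ffunE eqxx /= mulr1 mul1r.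
  case: (pickP (fun _ : cmatch n => true)) => [a0 _|none]; last first.
    by left; apply/ffunP => k; have := none (val k).1.1.
  have hu : z (ekey a0) * w (ekey a0) = 1.
    by move/ffunP: zw => /(_ (ekey a0)); rewrite Hmul_suppL // ffunE Hone_ekey.
  have hc c : z (ekey c) = z (ekey a0) by apply: eqc.
  have := supp_const sz hc.
  case: (intfac hu) => -> h; [left|right]; apply/ffunP => k; rewrite h ?ffN.
    by rewrite mul1r.
  by rewrite mulN1r.
have Hs := @Hone_supp n.
have Nsupp : suppE (- Hone n).
  by move=> k; rewrite ffN oppr_eq0 => /Hs.
case=> ->; split.
- by apply: (const_Z0 (lam := 1)) => // c; rewrite Hone_ekey.
- exists (Hone n); split; first by apply: (const_Z0 (lam := 1)) => // c; rewrite Hone_ekey.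
  by split; apply: (const_sq (lam := 1)) => // c; rewrite Hone_ekey.
- by apply: (const_Z0 (lam := -1)) => // c; rewrite ffN Hone_ekey.
- exists (- Hone n); split; first by apply: (const_Z0 (lam := -1)) => // c; rewrite ffN Hone_ekey.
  by split; apply: (const_sq (lam := -1)) => //; try move=> c; rewrite ?ffN ?Hone_ekey ?mulrNN ?mulr1.
Qed.
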